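(* Let $\mu,\nu$ be partitions of $n$ with $p(\nu)=p(\mu)+k$, where $k\ge2$. Then \[ \sum_{\substack{\mu_1,\dots,\mu_{k-1}\text{ partitions of }n:\\ p(\mu_i)=p(\mu)+i}} t^\mu_{\mu_1}t^{\mu_1}_{\mu_2}\cdots t^{\mu_{k-1}}_\nu=k!\,t^\mu_\nu. \]
   Context: Let $\mathbb H$ be the upper half plane and $\mathcal O(\mathbb H)$ its ring of holomorphic functions. Let $V=\mathbb C[a_{-1},a_{-2},\dots,b_0,b_{-1},\dots]$ be the vacuum module of the Heisenberg Lie algebra $[a_m,b_n]=\delta_{m,-n}C$ (with $a_m1=0$ for $m\ge0$, $b_n1=0$ for $n>0$, $C=1$), a vertex algebra with fields $a(z)=\sum a_nz^{-n-1}$, $b(z)=\sum b_nz^{-n}$. Let $\mathscr D^{ch}(\mathbb H)=V\otimes_{\mathbb C[b_0]}\mathcal O(\mathbb H)$ ($b_0\mapsto\tau$, $b=b_0$), with $Y(f,z)=\sum_{i\ge0}\frac{f^{(i)}(b)}{i!}(\sum_{n\ne0}b_nz^{-n})^i$ for $f\in\mathcal O(\mathbb H)$. For a partition $\mu=(\mu_{(1)}\ge\dots\ge\mu_{(d)}\ge1)$, $p(\mu)=d$, $|\mu|=\sum\mu_{(i)}$ and $b_{-\mu}=b_{-\mu_{(1)}}\cdots b_{-\mu_{(d)}}$. $SL(2,\mathbb R)$ acts on the right by vertex algebra automorphisms $\pi(g)$, integrating the zero modes of $E=-a_{-1}$, $F=a_{-1}b_0^2+2b_{-1}$, $H=-2a_{-1}b_0$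 via $\pi(e^x)=\exp(-x_{(0)})$; for $g=\begin{pmatrix}\alpha&\beta\\\gamma&\delta\end{pmatrix}$, $\pi(g)a_{-1}=a_{-1}(\gamma b+\delta)^2+2\gamma^2b_{-1}$ and $\pi(g)f(b)=f(\frac{\alpha b+\beta}{\gamma b+\delta})$. For each partition $\mu$ there are unique constants $t^\mu_\nu$ (for partitions $\nu$ with $|\nu|=|\mu|$, $p(\nu)\ge p(\mu)$), independent of $g$, such that for all $g\in SL(2,\mathbb R)$ \[ \pi(g)(b_{-\mu}\cdot1)=\sum_{\nu:\,p(\nu)\ge p(\mu)}t^\mu_\nu(-\gamma)^{p(\nu)-p(\mu)}\,b_{-\nu}\,(\gamma b+\delta)^{-p(\mu)-p(\nu)}. \] *)

(* Defs.v *)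
From HB Require Import structures.
From mathcomp Require Import all_boot all_order all_algebra.
From mathcomp Require Import complex.
From mathcomp Require Import reals.
From mathcomp Require Import mpoly.
Set Implicit Arguments. Unset Strict Implicit. Unset Printing Implicit Defensive.
Import Order.TTheory GRing.Theory Num.Theory.
Local Open Scope ring_scope.
Local Open Scope complex_scope.

(* p(mu) = size mu.                                                     *)
Definition is_partition (n : nat) (s : seq nat) : bool :=
  [&& sorted geq s, all (fun k => 0 < k)%N s & sumn s == n].

Fixpoint seqs_len (n l : nat) : seq (seq nat) :=
  if l is l'.+1 then
    flatten [seq [seq x :: s | s <- seqs_len n l'] | x <- iota 1 n]
  else [:: [::]].

Definition partitions (n : nat) : seq (seq nat) :=
  [seq s <- flatten [seq seqs_len n l | l <- iota 0 n.+1] | is_partition n s].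

(* Model of the b-sector of D^ch(H) evaluated at a point tau of H.      *)
(* b_{-k} (k = 1..N) is the polynomial variable 'X_(inord k) of         *)
(* {mpoly R[i][N.+1]} (variable 0 unused); functions f(b) in O(H) are   *)
(* evaluated at b_0 = tau.                                              *)
Section Model.
Variable R : realType.
Local Notation C := R[i].

Definition bvar (N k : nat) : {mpoly C[N.+1]} := 'X_(inord k).

Definition bmon (N : nat) (nu : seq nat) : {mpoly C[N.+1]} :=
  \prod_(k <- nu) bvar N k.

(* sum_{n <> 0} b_n z^{-n} applied to the vacuum = sum_{k >= 1} b_{-k} z^k,
   truncated at k <= N (harmless for the coefficients of z^m, m <= N). *)
Definition bfield (N : nat) : {poly {mpoly C[N.+1]}} :=
  \sum_(1 <= k < N.+1) (bvar N k)%:P * 'X^k.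

(* Taylor coefficients f^{(i)}(tau)/i! of the Moebius function
   f(b) = (a b + bb)/(c b + d), i.e. the unique sequence s with
   (c (tau + w) + d) * sum_i s_i w^i = a (tau + w) + bb  as power series in w. *)
Fixpoint mobius_taylor (a bb c d : R) (tau : C) (i : nat) : C :=
  if i is i'.+1 then
    ((i' == 0%N)%:R * a%:C - c%:C * mobius_taylor a bb c d tau i')
      / (c%:C * tau + d%:C)
  else (a%:C * tau + bb%:C) / (c%:C * tau + d%:C).

(* pi(g)(b_{-m} 1) = coefficient of z^m in
   Y(pi(g) b, z) 1 = sum_i f^{(i)}(b)/i! (sum_{n<>0} b_n z^{-n})^i 1,
   with f(b) = (a b + bb)/(c b + d); only i <= m contribute. *)
Definition pi_b (a bb c d : R) (tau : C) (N m : nat) : {mpoly C[N.+1]} :=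
  \sum_(i < m.+1) mobius_taylor a bb c d tau i *: ((bfield N ^+ i)`_m).

Definition pi_bmon (a bb c d : R) (tau : C) (N : nat) (mu : seq nat)
  : {mpoly C[N.+1]} :=
  \prod_(m <- mu) pi_b a bb c d tau N m.

(* The defining property of the constants t^mu_nu: for every partition mu,
   every g = (a bb; c d) in SL(2,R) and every tau in H,
   pi(g)(b_{-mu} 1) = sum_{nu, p(nu) >= p(mu)} t^mu_nu (-c)^{p(nu)-p(mu)}
                        b_{-nu} (c tau + d)^{-p(mu)-p(nu)}. *)
Definition is_t_family (t : seq nat -> seq nat -> C) : Prop :=
  forall mu : seq nat, is_partition (sumn mu) mu ->
  forall a bb c d : R, a * d - bb * c = 1 ->
  forall tau : C, 0 < complex.Im tau ->
    pi_bmon a bb c d tau (sumn mu) mu =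
    \sum_(nu <- partitions (sumn mu) | (size mu <= size nu)%N)
       (t mu nu * (- c%:C) ^+ (size nu - size mu)
          * (c%:C * tau + d%:C) ^- (size mu + size nu)) *: bmon (sumn mu) nu.

(* chain_sum t n nu j mu = sum over partitions mu_1, ..., mu_j of n with
   p(mu_i) = p(mu) + i of t^mu_{mu_1} t^{mu_1}_{mu_2} ... t^{mu_j}_nu. *)
Fixpoint chain_sum (t : seq nat -> seq nat -> C) (n : nat) (nu : seq nat)
  (j : nat) (mu : seq nat) : C :=
  if j is j'.+1 then
    \sum_(m <- partitions n | size m == (size mu).+1)
       t mu m * chain_sum t n nu j' m
  else t mu nu.

End Model.

(* Main.v *)
Require Import Defs.
From HB Require Import structures.
From mathcomp Require Import all_boot all_order all_algebra.
From mathcomp Require Import complex reals mpoly.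
From mathcomp Require Import zify ring.
Set Implicit Arguments. Unset Strict Implicit. Unset Printing Implicit Defensive.
Import Order.TTheory GRing.Theory Num.Theory.
Local Open Scope ring_scope.

Section Alg.
Variable R : realType.
Variable N : nat.
Local Notation C := R[i].
Local Notation P := {mpoly C[N.+1]}.
Local Notation PY := {poly P}.
Local Notation B := (bfield R N).

Definition e (i m : nat) : P := (B ^+ i)`_m.

Definition B0 : PY := \sum_(1 <= k < N.+1) (bvar R N k)%:P * 'X^(k.-1).

Lemma B_eq : B = 'X * B0.
Proof.
rewrite /bfield /B0 mulr_sumr; apply: eq_big_nat => k /andP[k1 _].
by rewrite mulrCA -exprS prednK.
Qed.

Lemma e_low i m : (m < i)%N -> e i m = 0.
Proof. by move=> h; rewrite /e B_eq exprMn coefXnM h. Qed.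

Lemma e0 m : e 0 m = (m == 0)%:R.
Proof. by rewrite /e expr0 coef1. Qed.

Lemma eD i j m : e (i + j) m = \sum_(k < m.+1) e i k * e j (m - k).
Proof. by rewrite /e exprD coefM. Qed.

Lemma e1 m : e 1 m = if (0 < m <= N)%N then bvar R N m else 0.
Proof.
rewrite /e expr1 /bfield coef_sum.
under eq_bigr do rewrite coefCM coefXn.
case: ifP => hm.
  rewrite (big_cat_nat (n := m)) /=; try lia.
  rewrite [X in _ + X]big_ltn; last lia.
  rewrite eqxx mulr1 big_nat big1 ?add0r; last by move=> k /andP[_ ?]; rewrite (_ : (m == k) = false) ?mulr0 //; lia.
  rewrite big_nat big1 ?addr0 // => k /andP[? _]; rewrite (_ : (m == k) = false) ?mulr0 //; lia.
rewrite big_nat big1 // => k hk; rewrite (_ : (m == k) = false) ?mulr0 //; lia.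
Qed.

Definition Q (m : nat) : PY := \poly_(i < m) e i.+1 m.

Lemma coefQ m i : (Q m)`_i = e i.+1 m.
Proof. by rewrite coef_poly; case: ltnP => // h; rewrite e_low. Qed.


Definition fC : {rmorphism C -> PY} := polyC \o mpolyC N.+1 (R:=C).
Definition hQ (i : 'I_N.+1) : PY := Q i.
Local Notation Phi := (mmap fC hQ).

Lemma PhiM p q : Phi (p * q) = Phi p * Phi q. Proof. exact: rmorphM. Qed.
Lemma PhiD p q : Phi (p + q) = Phi p + Phi q. Proof. exact: rmorphD. Qed.
Lemma Phi0 : Phi 0 = 0. Proof. exact: rmorph0. Qed.
Lemma Phi1 : Phi 1 = 1. Proof. exact: rmorph1. Qed.
Lemma Phi_sum I (r : seq I) (Pr : pred I) (G : I -> P) :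
  Phi (\sum_(i <- r | Pr i) G i) = \sum_(i <- r | Pr i) Phi (G i).
Proof. exact: rmorph_sum. Qed.
Lemma Phi_prod I (r : seq I) (G : I -> P) :
  Phi (\prod_(i <- r) G i) = \prod_(i <- r) Phi (G i).
Proof. exact: rmorph_prod. Qed.
Lemma PhiZ c p : Phi (c *: p) = (c%:MP)%:P * Phi p.
Proof. by rewrite mmapZ. Qed.

Lemma Phi_bvar k : (k <= N)%N -> Phi (bvar R N k) = Q k.
Proof. by move=> hk; rewrite /bvar mmapX mmap1U /hQ inordK. Qed.

Lemma Q0 : Q 0 = 0.
Proof. by apply/polyP => i; rewrite coefQ coef0 e_low. Qed.

Lemma Phi_e1 m : (m <= N)%N -> Phi (e 1 m) = Q m.
Proof.
move=> hm; rewrite e1; case: ifP => h; first by rewrite Phi_bvar.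
by rewrite Phi0 (_ : m = 0%N) ?Q0 //; lia.
Qed.

Lemma Phi_e2 m : (m <= N)%N -> Phi (e 2 m) = (Q m)^`().
Proof.
move=> hm; rewrite (eD 1 1) Phi_sum.
rewrite (eq_bigr (fun k : 'I_m.+1 => Q k * Q (m - k))); last first.
  move=> k _; have := ltn_ord k => hk.
  by rewrite PhiM !Phi_e1 //; lia.
apply/polyP => s; rewrite coef_sum coef_deriv coefQ.
under eq_bigr => k _ do rewrite coefM.
rewrite exchange_big /=.
rewrite (eq_bigr (fun _ => e s.+2 m)).
  by rewrite sumr_const card_ord.
move=> l _; rewrite (_ : s.+2 = l.+1 + (s - l).+1)%N; last by have := ltn_ord l; lia.
by rewrite eD; apply: eq_bigr => k _; rewrite !coefQ.
Qed.

Definition F (mu : seq nat) : PY := \prod_(x <- mu) Q x.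

Lemma Phi_F mu : all (fun x => x <= N)%N mu ->
  Phi ((F mu)`_0) = F mu /\ Phi ((F mu)`_1) = (F mu)^`().
Proof.
elim: mu => [|x mu IH] /=.
  by rewrite /F big_nil coef1 /= Phi1 coef1 /= Phi0 -polyC1 derivC.
move=> /andP[hx /IH [I0 I1]]; rewrite /F big_cons -/(F mu); split.
  by rewrite coef0M PhiM I0 coefQ Phi_e1.
rewrite coefM big_ord_recr big_ord_recr big_ord0 /= add0r.
rewrite PhiD !PhiM !coefQ I0 I1 Phi_e1 // Phi_e2 // derivM.
by rewrite addrC.
Qed.

Lemma Phi_bmon nu : all (fun x => x <= N)%N nu -> Phi (bmon R N nu) = F nu.
Proof.
rewrite /bmon /F Phi_prod; elim: nu => [|x nu IH] /=; first by rewrite !big_nil.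
by move=> /andP[hx /IH h]; rewrite !big_cons h Phi_bvar.
Qed.

End Alg.
Definition mono N (nu : seq nat) : 'X_{1..N.+1} :=
  \big[@mnm_add _/@mnm0 _]_(k <- nu) U_(inord k)%MM.

Lemma bmonE (R : realType) N nu : bmon R N nu = 'X_[mono N nu].
Proof.
rewrite /bmon /mono; elim: nu => [|x nu IH]; first by rewrite !big_nil mpolyX0.
by rewrite !big_cons IH /bvar -mpolyXD.
Qed.

Lemma mono_count N nu x : all (fun k => k <= N)%N nu -> (x <= N)%N ->
  mono N nu (inord x) = count_mem x nu.
Proof.
move=> + hx; elim: nu => [|k nu IH] /=; first by rewrite /mono big_nil mnm0E.
move=> /andP[hk /IH h]; rewrite /mono big_cons mnmDE -/(mono N nu) h mnm1E.
congr (_ + _)%N; rewrite -val_eqE /= !inordK //.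
Qed.

Lemma mono_inj N nu nu' :
  sorted geq nu -> sorted geq nu' ->
  all (fun k => k <= N)%N nu -> all (fun k => k <= N)%N nu' ->
  mono N nu = mono N nu' -> nu = nu'.
Proof.
move=> s1 s2 a1 a2 h; apply: (sorted_eq (leT := geq)) => //.
- by move=> a b c /= h1 h2; lia.
- by move=> a b /andP[h1 h2]; lia.
rewrite /perm_eq; apply/allP => x; rewrite mem_cat => hx.
have xN : (x <= N)%N.
  by case/orP: hx => hx; [move/allP: a1 => /(_ x hx) | move/allP: a2 => /(_ x hx)].
by rewrite /= -(mono_count a1 xN) -(mono_count a2 xN) h.
Qed.

Lemma mem_le_sumn (s : seq nat) x : x \in s -> (x <= sumn s)%N.
Proof.
elim: s => [|y s IH] //=; rewrite inE => /orP[/eqP -> | /IH h]; lia.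
Qed.

Lemma size_le_sumn (s : seq nat) : all (fun k => 0 < k)%N s -> (size s <= sumn s)%N.
Proof. elim: s => [|y s IH] //= /andP[h /IH]; lia. Qed.

Lemma part_le n nu : is_partition n nu -> all (fun k => k <= n)%N nu.
Proof.
case/and3P => _ _ /eqP <-; apply/allP => x; exact: mem_le_sumn.
Qed.

Lemma seqs_lenP n s : all (fun x => 0 < x <= n)%N s -> s \in seqs_len n (size s).
Proof.
elim: s => [|x s IH] /=; first by rewrite inE.
move=> /andP[hx /IH h]; apply/flatten_mapP; exists x.
  by rewrite mem_iota; lia.
by rewrite map_f.
Qed.

Lemma partitionsP n nu : (nu \in partitions n) = is_partition n nu.
Proof.
rewrite /partitions mem_filter; case h: is_partition; last by [].
rewrite andTb; apply/flatten_mapP; exists (size nu).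
  case/and3P: h => _ hp /eqP hs; by rewrite mem_iota add0n ltnS; have := size_le_sumn hp; rewrite hs.
apply: seqs_lenP; apply/allP => x hx.
case/and3P: h => _ /allP /(_ x hx) -> /eqP <-; exact: mem_le_sumn.
Qed.
Section Cx.
Local Open Scope complex_scope.
Variable R : realType.
Local Notation C := R[i].
Definition Lc (j : nat) : C := (1%:C * 'i%C + (j%:R : R)%:C)%C.

Lemma Lc_neq0 j : Lc j != 0.
Proof.
apply/eqP => /(congr1 (@complex.Im R)) /=. apply/eqP. rewrite !(mul1r, mul0r, addr0) oner_eq0 //. Qed.


Lemma mob (d : R) (tau : C) i : mobius_taylor 0 (-1) 1 d tau i.+1 =
  ((1%:C * tau + d%:C)^-1)^+2 * (- (1%:C * tau + d%:C)^-1)^+i.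
Proof.
elim: i => [|i IH].
  rewrite /= !rmorph0 rmorph1 rmorphN1; ring.
have -> : mobius_taylor 0 (-1) 1 d tau i.+2 =
  (((i.+1 == 0)%N%:R * 0%:C - 1%:C * mobius_taylor 0 (-1) 1 d tau i.+1)
      / (1%:C * tau + d%:C)) by [].
rewrite IH !rmorph0 rmorph1 (exprS (- _) i).
set z := (_ ^-1); set w := (- z) ^+ i. rewrite /z. set L := (1 * tau + _). ring.
Qed.
End Cx.

Section Ext.
Local Open Scope complex_scope.
Variable R : realType.
Variable n : nat.
Local Notation C := R[i].
Local Notation P := {mpoly C[n.+1]}.
Local Notation PY := {poly P}.
Variable t : seq nat -> seq nat -> C.

Lemma mulXC (c : C) i (p : P) : p * (c%:MP)^+i = (c^+i) *: p.
Proof.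
elim: i => [|i IH]; first by rewrite !expr0 mulr1 scale1r.
by rewrite exprS mulrCA IH mul_mpolyC scalerA exprS.
Qed.

Definition G (mu : seq nat) : PY :=
  \sum_(nu <- partitions n | (size mu <= size nu)%N)
     (t mu nu *: bmon R n nu)%:P * 'X^(size nu - size mu).

Lemma pi_b_val (d : R) x : (0 < x)%N ->
  pi_b 0 (-1) 1 d 'i n x =
  ((1%:C * 'i + d%:C)^-1)^+2 *: (Q R n x).[(- (1%:C * 'i + d%:C)^-1)%:MP].
Proof.
move=> hx; rewrite /pi_b big_ord_recl.
have -> : (bfield R n ^+ 0)`_x = 0 by rewrite expr0 coef1; case: x hx.
rewrite scaler0 add0r /Q horner_poly scaler_sumr; apply: eq_bigr => i _.
rewrite lift0 mob /e mulXC scalerA //.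
Qed.

Lemma pi_bmon_val (d : R) mu : all (fun x => 0 < x)%N mu ->
  pi_bmon 0 (-1) 1 d 'i n mu =
  (((1%:C * 'i + d%:C)^-1)^+2)^+(size mu) *:
     (F R n mu).[(- (1%:C * 'i + d%:C)^-1)%:MP].
Proof.
rewrite /pi_bmon /F; elim: mu => [|x mu IH] /=.
  by rewrite !big_nil hornerC scale1r.
move=> /andP[hx /IH h]; rewrite !big_cons h pi_b_val // hornerM.
by rewrite -scalerAl -scalerAr scalerA (exprS _ (size mu)).
Qed.

Lemma rhs_val (d : R) mu :
  \sum_(nu <- partitions n | (size mu <= size nu)%N)
       (t mu nu * (- 1%:C) ^+ (size nu - size mu)
          * (1%:C * 'i + d%:C) ^- (size mu + size nu)) *: bmon R n nu =
  (((1%:C * 'i + d%:C)^-1)^+2)^+(size mu) *: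
     (G mu).[(- (1%:C * 'i + d%:C)^-1)%:MP].
Proof.
rewrite /G horner_sum scaler_sumr; apply: eq_bigr => nu hnu.
rewrite hornerCM hornerXn mulXC !scalerA.
congr (_ *: _).
set L := (1%:C * 'i + d%:C); set k := (size nu - size mu)%N.
have -> : (size nu = size mu + k)%N by rewrite /k; lia.
rewrite rmorph1 -exprVn !exprD -exprM mulnC exprM expr2.
set z := L^-1; set a := z ^+ size mu; rewrite (exprNn z); ring.
Qed.

Lemma scale_inj (k : C) (p q : P) : k != 0 -> k *: p = k *: q -> p = q.
Proof.
move=> hk /(congr1 (fun r => k^-1 *: r)); rewrite !scalerA mulVf // !scale1r //.
Qed.

Lemma L_neq0 (d : R) : (1%:C * 'i + d%:C) != 0 :> C.
Proof.
apply/eqP => /(congr1 (@complex.Im R)) /=; apply/eqP.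
by rewrite !(mul1r, mul0r, addr0) oner_eq0.
Qed.

Lemma y_inj : injective (fun j : nat => - (1%:C * 'i + ((j%:R : R))%:C)^-1 : C).
Proof.
move=> a b /oppr_inj /invr_inj /(congr1 (@complex.Re R)) /=.
rewrite !(mul1r, mul0r, mulr0, subr0, add0r) => /eqP.
by rewrite oppr0 !add0r eqr_nat => /eqP.
Qed.

Lemma FG (ht : is_t_family t) mu : is_partition n mu -> F R n mu = G mu.
Proof.
move=> hp; have hs : sumn mu = n by case/and3P: hp => _ _ /eqP.
have hpos : all (fun x => 0 < x)%N mu by case/and3P: hp.
have key : forall j : nat,
    (F R n mu).[(- (1%:C * 'i + ((j%:R : R))%:C)^-1)%:MP] =
    (G mu).[(- (1%:C * 'i + ((j%:R:R))%:C)^-1)%:MP].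
  move=> j.
  have hp' : is_partition (sumn mu) mu by rewrite hs.
  have hdet : (0 : R) * j%:R - (-1) * 1 = 1 by rewrite mul0r mulr1 sub0r opprK.
  have him : 0 < complex.Im ('i : C) by rewrite /= ltr01.
  move: (ht mu hp' 0 (-1) 1 j%:R hdet 'i him).
  rewrite hs pi_bmon_val // rhs_val; apply: scale_inj.
  by rewrite !expf_neq0 // invr_eq0 L_neq0.
apply/eqP; rewrite -subr_eq0; apply/negPn/negP => hne.
set p := F R n mu - G mu in hne.
pose ys := [seq - (1%:C * 'i + ((j%:R : R))%:C)^-1 | j <- iota 0 (size p)] : seq C.
have := @max_ring_poly_roots _ p [seq (mpolyC n.+1 y) | y <- ys] hne.
rewrite !size_map size_iota ltnn => H; suff : false by []; apply: H.
  apply/allP => c /mapP [y /mapP [j _ ->] ->].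
  by rewrite /root /p hornerD hornerN key subrr.
by rewrite map_uniq_roots (map_inj_uniq y_inj) iota_uniq.
Qed.

End Ext.

Lemma sum_pick (R : realType) (T : eqType) (s : seq T) (Pr : pred T) (f : T -> R[i]) (x : T) :
  \sum_(y <- s | Pr y) f y * (y == x)%:R = (count_mem x s)%:R * f x *+ Pr x.
Proof.
elim: s => [|y s IH]; first by rewrite big_nil mul0r mul0rn.
rewrite big_cons IH /=; case: (eqVneq y x) => [->|ne].
  by case: (Pr x); rewrite ?mulr0n ?addr0 // mulr1 !mulr1n natrD mulrDl mul1r.
by case: (Pr y); rewrite /= ?mulr0 ?add0r ?add0n.
Qed.

Lemma mono_eq n a b : is_partition n a -> is_partition n b ->
  (mono n a == mono n b) = (a == b).
Proof.
move=> ha hb; apply/eqP/eqP => [h|-> //]; apply: (mono_inj _ _ (part_le ha) (part_le hb) h).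
  by case/and3P: ha.
by case/and3P: hb.
Qed.

Section Final.
Local Open Scope complex_scope.
Variable R : realType.
Variable n : nat.
Local Notation C := R[i].
Local Notation P := {mpoly C[n.+1]}.
Local Notation PY := {poly P}.
Variable t : seq nat -> seq nat -> C.
Hypothesis ht : is_t_family t.

Lemma mcoeff_sum m I (r : seq I) (Pr : pred I) (g : I -> P) :
  mcoeff m (\sum_(i <- r | Pr i) g i) = \sum_(i <- r | Pr i) mcoeff m (g i).
Proof. exact: raddf_sum. Qed.

Lemma mcoeffMn m (p : P) k : mcoeff m (p *+ k) = mcoeff m p *+ k.
Proof. exact: raddfMn. Qed.

Lemma coefG mu j : (G n t mu)`_j =
  \sum_(nu <- partitions n | (size mu <= size nu)%N)
     (t mu nu *: bmon R n nu) *+ (j == size nu - size mu)%N.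
Proof.
rewrite /G coef_sum; apply: eq_bigr => nu _.
by rewrite coefCM coefXn mulr_natr.
Qed.

Lemma mcoeffG mu nu j : is_partition n nu ->
  mcoeff (mono n nu) ((G n t mu)`_j) =
  (count_mem nu (partitions n))%:R * (t mu nu *+ (j == size nu - size mu)%N)
     *+ (size mu <= size nu)%N.
Proof.
move=> hnu; rewrite coefG mcoeff_sum big_seq_cond.
rewrite (eq_bigr (fun y => (t mu y *+ (j == size y - size mu)%N) * (y == nu)%:R)); last first.
  move=> y /andP[hy _]; rewrite mcoeffMn mcoeffZ bmonE mcoeffX.
  by rewrite mono_eq // -?partitionsP // mulrnAl.
by rewrite sum_pick /= partitionsP hnu.
Qed.

Lemma PhiMn' (p : P) k : mmap (@fC R n) (@hQ R n) (p *+ k) = mmap (@fC R n) (@hQ R n) p *+ k.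
Proof. exact: raddfMn. Qed.

Lemma Fder mu : is_partition n mu ->
  (F R n mu)^`() = \sum_(nu <- partitions n | (size mu <= size nu)%N)
     ((t mu nu)%:MP%:P * G n t nu) *+ (1 == size nu - size mu)%N.
Proof.
move=> hmu; have [_ <-] := Phi_F R (part_le hmu).
rewrite (FG ht hmu) coefG Phi_sum big_seq_cond [RHS]big_seq_cond.
apply: eq_bigr => nu /andP[hnu _]; rewrite partitionsP in hnu.
by rewrite PhiMn' PhiZ (Phi_bmon R (part_le hnu)) // (FG ht hnu).
Qed.

Lemma key mu nu k : is_partition n mu -> is_partition n nu ->
  size nu = (size mu + k)%N -> (0 < k)%N ->
  t mu nu *+ k = \sum_(m <- partitions n | size m == (size mu).+1) t mu m * t m nu.
Proof.
move=> hmu hnu hs hk.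
have cnt0 : (count_mem nu (partitions n))%:R != 0 :> C.
  by rewrite pnatr_eq0 -lt0n -has_count; apply/hasP; exists nu; rewrite ?partitionsP /=.
apply: (mulfI cnt0).
have := congr1 (fun p : PY => mcoeff (mono n nu) (p`_k.-1)) (Fder hmu).
rewrite /= coef_deriv prednK // (FG ht hmu) mcoeffMn mcoeffG // hs addKn eqxx leq_addr /=.
rewrite mulr1n -mulrnAr => ->.
rewrite coef_sum mcoeff_sum mulr_sumr big_mkcond [RHS]big_mkcond /=.
apply: eq_bigr => m _.
rewrite coefMn coefCM mcoeffMn mcoeffCM mcoeffG //.
case: ifP => h1; case: ifP => h2.
- have -> : (1 == size m - size mu)%N = true by lia.
  have -> : (k.-1 == size nu - size m)%N = true by lia.
  have -> : (size m <= size nu)%N = true by lia.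
  by rewrite !mulr1n mulrCA.
- have -> : (1 == size m - size mu)%N = false by lia.
  by rewrite mulr0n.
- by lia.
- by [].
Qed.

Lemma chain mu nu k : is_partition n mu -> is_partition n nu ->
  size nu = (size mu + k.+1)%N ->
  chain_sum t n nu k mu = (k.+1)`!%:R * t mu nu.
Proof.
elim: k mu => [|k IH] mu hmu hnu hs /=; first by rewrite mul1r.
rewrite big_seq_cond (eq_bigr (fun m => (k.+1)`!%:R * (t mu m * t m nu))); last first.
  move=> m /andP[hin /eqP hm]; rewrite partitionsP in hin.
  by rewrite IH // ?hm ?hs; [rewrite mulrCA | lia].
rewrite -big_seq_cond -mulr_sumr -(key hmu hnu hs) //.
rewrite -[_ *+ k.+2]mulr_natr [(k.+2)`!]factS natrM; ring.
Qed.

End Final.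

Unset Implicit Arguments.
Theorem lemma6p2 (R : realType) (t : seq nat -> seq nat -> R[i])
  (ht : is_t_family t) (n k : nat) (mu nu : seq nat) :
  is_partition n mu -> is_partition n nu ->
  size nu = (size mu + k)%N -> (2 <= k)%N ->
  chain_sum t n nu k.-1 mu = (k`!)%:R * t mu nu.
Proof.
move=> hmu hnu; case: k => [|k] hs hk //=.
exact: chain.
Qed.
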